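(* Let $\mathcal R\subset\mathcal G$ be finite with $\mathrm{id}\in\mathcal R$. Then the seminorms $\|\cdot\|_{\mathcal R,0}$ and $[\cdot]_{\mathcal R,0}$ on $U_{\mathrm{per}}$ are equivalent.
   Context: Euclidean group: $\mathrm E(n)$ consists of pairs $(A|b)$, $A\in\mathrm O(n)$, $b\in\mathbb R^n$, acting by $(A|b)\cdot x=Ax+b$, product $(A_1|b_1)(A_2|b_2)=(A_1A_2|b_1+A_1b_2)$; $\mathrm{rot}(A|b)=A$. Standing setting: $d=d_1+d_2$; $\mathcal S<\mathrm E(d_2)$ is a space group with translation subgroup $\mathcal T_{\mathcal S}$; $A\oplus(B|b)=(\mathrm{diag}(A,B)|(0,b))$. $\mathcal G$ is a discrete subgroup of $\mathrm E(d)$ contained in $\{A\oplus s:A\in\mathrm O(d_1),s\in\mathcal S\}$ projecting onto $\mathcal S$; $\mathcal T\subset\mathcal G$ maps bijectively onto $\mathcal T_{\mathcal S}$ under the projection. There is $m_0$ such that $\mathcal T^N=\{t^N:t\in\mathcal T\}$ is a normal finite-index subgroup of $\mathcal G$ isomorphic to $\mathbb Z^{d_2}$ iff $N\in\mathcal M=m_0\mathbb N$; $\mathcal C_N$ is a fixed set of representatives of $\mathcal G/\mathcal T^N$. $U_{\mathrm{per}}$: maps $u:\mathcal G\to\mathbb R^d$ with $u(gt)=u(g)$ for all $g\in\mathcal G$, $t\in\mathcal T^N$, for some $N\in\mathcal M$ ($\mathcal T^N$-periodic). $x_0\in\mathbb R^d$ with $g\mapsto g\cdot x_0$ injective; $d_{\mathrm{aff}}=\dim\mathrm{aff}(\mathcal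 G\cdot x_0)$; $\mathcal G\cdot x_0\subset\{0_{d-d_{\mathrm{aff}}}\}\times\mathbb R^{d_{\mathrm{aff}}}$ and $\mathcal G$ acts trivially on $\mathbb R^{d-d_{\mathrm{aff}}}\times\{0\}$. Let $\mathrm{Skew}_{0,d_2}(d)=\{\begin{pmatrix}S_1&S_2\\-S_2^T&0\end{pmatrix}:S_1\in\mathrm{Skew}(d_1),S_2\in\mathbb R^{d_1\times d_2}\}$. For $\mathcal R\subset\mathcal G$: $U_{\mathrm{trans}}(\mathcal R)=\{u:\mathcal R\to\mathbb R^d:\exists a\ \forall g:\mathrm{rot}(g)u(g)=a\}$, $U_{\mathrm{rot},0}(\mathcal R)=\{u:\mathcal R\to\mathbb R^d:\exists S\in\mathrm{Skew}_{0,d_2}(d)\ \forall g\in\mathcal R:\mathrm{rot}(g)u(g)=S(g\cdot x_0-x_0)\}$, $U_{\mathrm{iso},0}(\mathcal R)=U_{\mathrm{trans}}(\mathcal R)+U_{\mathrm{rot},0}(\mathcal R)$. For finite $\mathcal R$, distances are in the Euclidean norm of $(\mathbb R^d)^{\mathcal R}$; the discrete derivative is $\nabla_{\mathcal R}u(g)(h)=u(gh)-\mathrm{rot}(h)^Tu(g)$, $h\in\mathcal R$. For $\mathcal T^N$-periodic $u$: $\|u\|_{\mathcal R,0}=\big(\frac1{|\mathcal C_N|}\sum_{g\in\mathcal C_N}\mathrm{dist}(u(g\,\cdot)|_{\mathcal R},U_{\mathrm{iso},0}(\mathcal R))^2\big)^{1/2}$ and $[u]_{\mathcal R,0}=\big(\frac1{|\mathcal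 C_N|}\sum_{g\in\mathcal C_N}\mathrm{dist}(\nabla_{\mathcal R}u(g),U_{\mathrm{rot},0}(\mathcal R))^2\big)^{1/2}$. *)

(* Defs.v *)
From HB Require Import structures.
From mathcomp Require Import all_boot all_order all_algebra.
From mathcomp Require Import classical_sets reals.
Set Implicit Arguments. Unset Strict Implicit. Unset Printing Implicit Defensive.
Import Order.TTheory GRing.Theory Num.Theory.
Local Open Scope ring_scope.
Local Open Scope classical_set_scope.

Section Euclid.
Variable R : realType.

Definition Eucl (n : nat) := ('M[R]_n * 'cV[R]_n)%type.

Definition orthogonal n (A : 'M[R]_n) : Prop := A^T *m A = 1%:M.
Definition inE n (g : Eucl n) : Prop := orthogonal g.1.

Definition rot n (g : Eucl n) : 'M[R]_n := g.1.
Definition eid n : Eucl n := (1%:M, 0).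
Definition emul n (g h : Eucl n) : Eucl n := (g.1 *m h.1, g.2 + g.1 *m h.2).
(* inverse of an element of E(n) (A orthogonal): (A^T | - A^T b) *)
Definition einv n (g : Eucl n) : Eucl n := (g.1^T, - (g.1^T *m g.2)).
Definition act n (g : Eucl n) (x : 'cV[R]_n) : 'cV[R]_n := g.1 *m x + g.2.
Definition epow n (g : Eucl n) (k : nat) : Eucl n := iter k (emul g) (eid n).

Definition is_subgroup n (H : Eucl n -> Prop) : Prop :=
  [/\ forall g, H g -> inE g,
      H (eid n),
      forall g h, H g -> H h -> H (emul g h) &
      forall g, H g -> H (einv g)].

Definition is_discrete n (H : Eucl n -> Prop) : Prop :=
  exists2 eps : R, 0 < eps &
    forall g, H g ->
      (forall i j, `|g.1 i j - (1%:M : 'M[R]_n) i j| < eps) ->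
      (forall i, `|g.2 i 0| < eps) -> g = eid n.

Definition sqnorm n (x : 'cV[R]_n) : R := \sum_i (x i 0) ^+ 2.

(* cocompact: S . K = R^n for a compact K; equivalently (K inside a ball)
   every point is within a bounded distance of the orbit of 0. *)
Definition is_cocompact n (H : Eucl n -> Prop) : Prop :=
  exists r : R, forall x : 'cV[R]_n, exists2 s, H s & sqnorm (x - act s 0) <= r.

Definition space_group n (S : Eucl n -> Prop) : Prop :=
  [/\ is_subgroup S, is_discrete S & is_cocompact S].

Definition transl_sub n (S : Eucl n -> Prop) (s : Eucl n) : Prop :=
  S s /\ s.1 = 1%:M.

Definition dsum d1 d2 (A : 'M[R]_d1) (s : Eucl d2) : Eucl (d1 + d2) :=
  (block_mx A 0 0 s.1, col_mx 0 s.2).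
Definition proj d1 d2 (g : Eucl (d1 + d2)) : Eucl d2 :=
  (drsubmx g.1, dsubmx g.2).

Definition powset n (T : Eucl n -> Prop) (N : nat) (x : Eucl n) : Prop :=
  exists2 t, T t & x = epow t N.

Definition normal_fi_Zk n (G H : Eucl n -> Prop) (k : nat) : Prop :=
  [/\ is_subgroup H, (forall h, H h -> G h),
      (forall g h, G g -> H h -> H (emul (emul g h) (einv g))),
      (exists cs : seq (Eucl n), forall g, G g ->
           exists2 c, c \in cs & G c /\ H (emul (einv c) g)) &
      (exists phi : 'rV[int]_k -> Eucl n,
          [/\ forall a, H (phi a),
              forall h, H h -> exists a, phi a = h,
              injective phi &
              forall a b, phi (a + b) = emul (phi a) (phi b)])].

(* affine dimension of a set of points: dimension of the span of all
   differences p - q (p, q in P) *)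
Definition diff_mx n k (p q : 'I_k -> 'cV[R]_n) : 'M[R]_(k, n) :=
  \matrix_(l, i) (p l - q l) i 0.
Definition aff_dim_is n (P : 'cV[R]_n -> Prop) (k : nat) : Prop :=
  (exists p q : 'I_k -> 'cV[R]_n,
      (forall l, P (p l) /\ P (q l)) /\ row_free (diff_mx p q)) /\
  (forall p q : 'I_k.+1 -> 'cV[R]_n,
      (forall l, P (p l) /\ P (q l)) -> ~~ row_free (diff_mx p q)).

Definition standing_setting (d1 d2 : nat)
    (S : Eucl d2 -> Prop) (G : Eucl (d1 + d2) -> Prop)
    (T : Eucl (d1 + d2) -> Prop) (m0 : nat)
    (C : nat -> seq (Eucl (d1 + d2))) (x0 : 'cV[R]_(d1 + d2)) (daff : nat)
    : Prop :=
  [/\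
      space_group S,
      [/\ is_subgroup G, is_discrete G,
      (forall g, G g -> exists A s, [/\ orthogonal A, S s & g = dsum A s]) /\
      (forall s, S s -> exists2 g, G g & proj g = s) &
      [/\ forall t, T t -> G t,
          forall t, T t -> transl_sub S (proj t),
          forall t t', T t -> T t' -> proj t = proj t' -> t = t' &
          forall s, transl_sub S s -> exists2 t, T t & proj t = s]],
      (0 < m0)%N /\
      (forall N, (0 < N)%N -> (normal_fi_Zk G (powset T N) d2 <-> (m0 %| N)%N)),
      (* C N : a set of representatives of G / T^N, for N in M *)
      (forall N, (0 < N)%N -> (m0 %| N)%N ->
         [/\ uniq (C N), (forall c, c \in C N -> G c) &
             forall g, G g ->
               (exists2 c, c \in C N & powset T N (emul (einv c) g)) /\
               (forall c c', c \in C N -> c' \in C N ->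
                  powset T N (emul (einv c) g) -> powset T N (emul (einv c') g) ->
                  c = c')]) &
      [/\ (forall g g', G g -> G g' -> act g x0 = act g' x0 -> g = g'),
          (daff <= d1 + d2)%N,
          aff_dim_is (fun p => exists2 g, G g & p = act g x0) daff,
          (forall g, G g -> forall i : 'I_(d1 + d2),
               (i < d1 + d2 - daff)%N -> (act g x0) i 0 = 0) &
          (forall g, G g -> forall y : 'cV[R]_(d1 + d2),
               (forall i : 'I_(d1 + d2), (d1 + d2 - daff <= i)%N -> y i 0 = 0) ->
               rot g *m y = y)]].

Definition periodic d (G T : Eucl d -> Prop) (N : nat)
    (u : Eucl d -> 'cV[R]_d) : Prop :=
  forall g t, G g -> powset T N t -> u (emul g t) = u g.

Definition skew0 d1 d2 (M : 'M[R]_(d1 + d2)) : Prop :=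
  M^T = - M /\ drsubmx M = 0.

Definition Utrans d (Rl : seq (Eucl d)) (w : Eucl d -> 'cV[R]_d) : Prop :=
  exists a : 'cV[R]_d, forall g, g \in Rl -> rot g *m w g = a.

Definition Urot0 d1 d2 (x0 : 'cV[R]_(d1 + d2)) (Rl : seq (Eucl (d1 + d2)))
    (w : Eucl (d1 + d2) -> 'cV[R]_(d1 + d2)) : Prop :=
  exists2 M : 'M[R]_(d1 + d2), skew0 M &
    forall g, g \in Rl -> rot g *m w g = M *m (act g x0 - x0).

Definition Uiso0 d1 d2 (x0 : 'cV[R]_(d1 + d2)) (Rl : seq (Eucl (d1 + d2)))
    (w : Eucl (d1 + d2) -> 'cV[R]_(d1 + d2)) : Prop :=
  exists w1 w2, [/\ Utrans Rl w1, Urot0 x0 Rl w2 &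
                   forall g, g \in Rl -> w g = w1 g + w2 g].

Definition distR d (Rl : seq (Eucl d)) (v : Eucl d -> 'cV[R]_d)
    (P : (Eucl d -> 'cV[R]_d) -> Prop) : R :=
  inf [set r | exists2 w, P w & r = Num.sqrt (\sum_(h <- Rl) sqnorm (v h - w h))].

Definition gradR d (u : Eucl d -> 'cV[R]_d) (g : Eucl d) : Eucl d -> 'cV[R]_d :=
  fun h => u (emul g h) - (rot h)^T *m u g.

Definition norm_R0 d1 d2 (x0 : 'cV[R]_(d1 + d2)) (Rl : seq (Eucl (d1 + d2)))
    (C : nat -> seq (Eucl (d1 + d2))) (N : nat)
    (u : Eucl (d1 + d2) -> 'cV[R]_(d1 + d2)) : R :=
  Num.sqrt ((size (C N))%:R^-1 *
    \sum_(g <- C N) (distR Rl (fun h => u (emul g h)) (Uiso0 x0 Rl)) ^+ 2).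

Definition semi_R0 d1 d2 (x0 : 'cV[R]_(d1 + d2)) (Rl : seq (Eucl (d1 + d2)))
    (C : nat -> seq (Eucl (d1 + d2))) (N : nat)
    (u : Eucl (d1 + d2) -> 'cV[R]_(d1 + d2)) : R :=
  Num.sqrt ((size (C N))%:R^-1 *
    \sum_(g <- C N) (distR Rl (gradR u g) (Urot0 x0 Rl)) ^+ 2).

End Euclid.

(* Main.v *)
Require Import Defs.
From HB Require Import structures.
From mathcomp Require Import all_boot all_order all_algebra.
From mathcomp Require Import classical_sets reals.
From mathcomp Require Import ring lra.
Import Order.TTheory GRing.Theory Num.Theory.
Local Open Scope ring_scope.

Section Aux.
Variable R : realType.

Lemma inf_scale (E F : set R) (k : R) : 0 < k -> (exists e, E e) -> (exists f, F f) ->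
  (forall e, E e -> 0 <= e) -> (forall f, F f -> exists2 e, E e & e <= k * f) ->
  inf E <= k * inf F.
Proof.
move=> k0 [e0 Ee0] [f0 Ff0] Epos H.
have hE : has_lbound E by exists 0.
have lb := ge_inf hE.
rewrite -ler_pdivrMl //.
apply: lb_le_inf; first by exists f0.
move=> f Ff; case: (H f Ff) => e Ee le.
rewrite ler_pdivrMl //; exact: (le_trans (lb e Ee) le).
Qed.

Lemma sqnormE n (x : 'cV[R]_n) : sqnorm x = (x^T *m x) 0 0.
Proof. rewrite /sqnorm !mxE; apply: eq_bigr => i _; by rewrite !mxE expr2. Qed.

Lemma sqnorm_ge0 n (x : 'cV[R]_n) : 0 <= sqnorm x.
Proof. by apply: sumr_ge0 => i _; rewrite sqr_ge0. Qed.

Lemma sqnorm_orth n (Q : 'M[R]_n) x : Q^T *m Q = 1%:M -> sqnorm (Q^T *m x) = sqnorm x.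
Proof.
move=> /mulmx1C HQ; rewrite !sqnormE trmx_mul trmxK.
by rewrite -mulmxA (mulmxA Q) HQ mul1mx.
Qed.

Lemma sqnormB n (x y : 'cV[R]_n) : sqnorm (x - y) <= 2 * sqnorm x + 2 * sqnorm y.
Proof.
rewrite /sqnorm !mulr_sumr -big_split /=; apply: ler_sum => i _.
rewrite !mxE -subr_ge0.
have -> : 2 * x i 0 ^+ 2 + 2 * y i 0 ^+ 2 - (x i 0 - y i 0) ^+ 2 = (x i 0 + y i 0) ^+ 2 by ring.
exact: sqr_ge0.
Qed.

Lemma sum_const_seq (T : Type) (s : seq T) (c : R) : \sum_(h <- s) c = (size s)%:R * c.
Proof.
elim: s => [|a l IH]; first by rewrite big_nil mul0r.
by rewrite big_cons IH /= -addn1 natrD; ring.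
Qed.

End Aux.
Section Main.
Variables (R : realType) (d1 d2 : nat) (x0 : 'cV[R]_(d1 + d2)).
Variable Rl : seq (Eucl R (d1 + d2)).
Hypothesis hO : forall h, h \in Rl -> Defs.orthogonal h.1.

Lemma orthC h : h \in Rl -> h.1 *m h.1^T = 1%:M.
Proof. by move=> /hO /mulmx1C. Qed.

Lemma Uiso0_0 : Uiso0 x0 Rl (fun _ => 0).
Proof.
exists (fun _ => 0), (fun _ => 0); split.
- by exists 0 => g _; rewrite mulmx0.
- exists 0; first by split; rewrite ?trmx0 ?oppr0 // /drsubmx; apply/matrixP=> i j; rewrite !mxE.
  by move=> g _; rewrite mulmx0 mul0mx.
- by move=> g _; rewrite addr0.
Qed.

Lemma Urot0_0 : Urot0 x0 Rl (fun _ => 0).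
Proof.
exists 0; first by split; rewrite ?trmx0 ?oppr0 // /drsubmx; apply/matrixP=> i j; rewrite !mxE.
by move=> g _; rewrite mulmx0 mul0mx.
Qed.

Lemma distR_ge0 v (P : _ -> Prop) : P (fun _ => 0) -> 0 <= distR Rl v P.
Proof.
move=> P0; apply: lb_le_inf.
  by exists (Num.sqrt (\sum_(h <- Rl) sqnorm (v h - 0))), (fun _ => 0).
by move=> r [w _ ->]; exact: sqrtr_ge0.
Qed.

Lemma dist_le1 u g :
  distR Rl (fun h => u (emul g h)) (Uiso0 x0 Rl) <= distR Rl (gradR u g) (Urot0 x0 Rl).
Proof.
rewrite -[X in _ <= X]mul1r; apply: inf_scale => //.
- by exists (Num.sqrt (\sum_(h <- Rl) sqnorm (u (emul g h) - 0))), (fun _ => 0) => //; exact: Uiso0_0.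
- by exists (Num.sqrt (\sum_(h <- Rl) sqnorm (gradR u g h - 0))), (fun _ => 0) => //; exact: Urot0_0.
- by move=> r [w _ ->]; exact: sqrtr_ge0.
move=> r [w Pw ->].
exists (Num.sqrt (\sum_(h <- Rl) sqnorm (u (emul g h) - (fun h => (Defs.rot h)^T *m u g + w h) h))).
  exists (fun h => (Defs.rot h)^T *m u g + w h) => //.
  exists (fun h => (Defs.rot h)^T *m u g), w; split => //.
  by exists (u g) => h hR /=; rewrite mulmxA /Defs.rot orthC // mul1mx.
rewrite mul1r le_eqVlt; apply/orP; left; apply/eqP; congr Num.sqrt.
by apply: eq_bigr => h _; rewrite /gradR opprD addrA.
Qed.

Hypothesis hU : uniq Rl.
Hypothesis hid : eid R (d1 + d2) \in Rl.

Definition cst : R := 2 + 2 * (size Rl)%:R.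

Lemma cst_ge1 : 1 <= cst.
Proof. rewrite /cst; have : (0 : R) <= (size Rl)%:R by []. lra. Qed.

Lemma dist_le2 u g :
  distR Rl (gradR u g) (Urot0 x0 Rl) <= cst * distR Rl (fun h => u (emul g h)) (Uiso0 x0 Rl).
Proof.
have c1 := cst_ge1.
apply: inf_scale.
- lra.
- by exists (Num.sqrt (\sum_(h <- Rl) sqnorm (gradR u g h - 0))), (fun _ => 0) => //; exact: Urot0_0.
- by exists (Num.sqrt (\sum_(h <- Rl) sqnorm (u (emul g h) - 0))), (fun _ => 0) => //; exact: Uiso0_0.
- by move=> r [w _ ->]; exact: sqrtr_ge0.
move=> r [w [w1 [w2 [[a Ha] [M skM HM] Hw]]] ->].
set w' := fun h => w h - (Defs.rot h)^T *m a.
exists (Num.sqrt (\sum_(h <- Rl) sqnorm (gradR u g h - w' h))).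
  exists w' => //; exists M => // h hR.
  rewrite /w' mulmxBr Hw // mulmxDr Ha //  mulmxA /Defs.rot orthC // mul1mx -/(Defs.rot h) HM //.
  by rewrite addrAC subrr add0r.
set x := fun h => u (emul g h) - w h.
have xe : x (eid R (d1 + d2)) = u g - a.
  rewrite /x Hw //.
  have -> : emul g (eid R (d1 + d2)) = g.
    by clear; case: g => A b; rewrite /emul /eid /= mulmx1 mulmx0 addr0.
  have e1 : w1 (eid R (d1 + d2)) = a by rewrite -(Ha _ hid) /Defs.rot /eid /= mul1mx.
  have e2 : w2 (eid R (d1 + d2)) = 0.
    rewrite -[LHS]mul1mx.
    have -> : (1%:M : 'M[R]_(d1 + d2)) = Defs.rot (eid R (d1 + d2)) by [].
    rewrite HM // /act /eid /= mul1mx addr0 subrr mulmx0 //.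
  by rewrite e1 e2 addr0.
have eq1 : forall h, gradR u g h - w' h = x h - (Defs.rot h)^T *m x (eid R (d1 + d2)).
  move=> k; rewrite xe /gradR /w' /x mulmxBr.
  by rewrite opprB opprD !addrA opprK -!addrA; congr (_ + _); rewrite [RHS]addrCA; congr (_ + _); exact: addrC.
have -> : \sum_(h <- Rl) sqnorm (gradR u g h - w' h) = \sum_(h <- Rl) sqnorm (x h - (Defs.rot h)^T *m x (eid R (d1 + d2))) by apply: eq_bigr => k _; rewrite eq1.
set S := \sum_(h <- Rl) sqnorm (x h).
have S0 : 0 <= S by apply: sumr_ge0 => h _; exact: sqnorm_ge0.
have xeS : sqnorm (x (eid R (d1 + d2))) <= S.
  rewrite /S (bigD1_seq _ hid hU) /= lerDl.
  by apply: sumr_ge0 => h _; exact: sqnorm_ge0.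
have le1 : \sum_(h <- Rl) sqnorm (x h - (Defs.rot h)^T *m x (eid R (d1 + d2))) <= cst ^+ 2 * S.
  apply: (@le_trans _ _ (\sum_(h <- Rl) (2 * sqnorm (x h) + 2 * sqnorm (x (eid R (d1 + d2)))))).
    rewrite big_seq_cond [X in _ <= X]big_seq_cond; apply: ler_sum => h /andP [hR _].
    by rewrite -(@sqnorm_orth R _ h.1 (x (eid R (d1 + d2))) (hO h hR)); exact: sqnormB.
  rewrite big_split /= -mulr_sumr -/S sum_const_seq.
  have : (0 : R) <= (size Rl)%:R by [].
  rewrite /cst in c1 *; nra.
rewrite -(ger0_norm (le_trans ler01 c1)) -sqrtr_sqr -sqrtrM ?sqr_ge0 //.
by rewrite ler_sqrt // mulr_ge0 ?sqr_ge0.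
Qed.

End Main.

Theorem proposition3p17 (R : realType) (d1 d2 : nat)
    (S : Eucl R d2 -> Prop) (G : Eucl R (d1 + d2) -> Prop)
    (T : Eucl R (d1 + d2) -> Prop) (m0 : nat)
    (C : nat -> seq (Eucl R (d1 + d2))) (x0 : 'cV[R]_(d1 + d2)) (daff : nat) :
  standing_setting S G T m0 C x0 daff ->
  forall Rl : seq (Eucl R (d1 + d2)),
    uniq Rl -> (forall h, h \in Rl -> G h) -> eid R (d1 + d2) \in Rl ->
  exists c1 c2 : R, [/\ 0 < c1, 0 < c2 &
    forall (N : nat) (u : Eucl R (d1 + d2) -> 'cV[R]_(d1 + d2)),
      (0 < N)%N -> (m0 %| N)%N -> periodic G T N u ->
      c1 * norm_R0 x0 Rl C N u <= semi_R0 x0 Rl C N u /\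
      semi_R0 x0 Rl C N u <= c2 * norm_R0 x0 Rl C N u].
Proof.
move=> [_ [[hsub _ _ _] _ _ _] _ _ _] Rl hU hG hid.
have hO : forall h, h \in Rl -> Defs.orthogonal h.1 by move=> h /hG /hsub.
have c1 := cst_ge1 R d1 d2 Rl.
exists 1, (cst R d1 d2 Rl); split => //; first lra.
move=> N u _ _ _.
set dA := fun g => distR Rl (fun h => u (emul g h)) (Uiso0 x0 Rl).
set dB := fun g => distR Rl (gradR u g) (Urot0 x0 Rl).
have dA0 : forall g, 0 <= dA g by move=> g; apply: distR_ge0; exact: Uiso0_0.
have dB0 : forall g, 0 <= dB g by move=> g; apply: distR_ge0; exact: Urot0_0.
have le1 : forall g, dA g <= dB g by move=> g; exact: (@dist_le1 R d1 d2 x0 Rl hO u g).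
have le2 : forall g, dB g <= cst R d1 d2 Rl * dA g by move=> g; exact: (@dist_le2 R d1 d2 x0 Rl hO hU hid u g).
have k0 : 0 <= (size (C N))%:R^-1 :> R by rewrite invr_ge0.
rewrite /norm_R0 /semi_R0 -/dA -/dB mul1r; split.
  rewrite ler_sqrt; last by rewrite mulr_ge0 // sumr_ge0 // => g _; rewrite sqr_ge0.
  rewrite ler_wpM2l //; apply: ler_sum => g _; rewrite !expr2.
  by apply: ler_pM; [exact: dA0|exact: dA0|exact: le1|exact: le1].
have cge0 : 0 <= cst R d1 d2 Rl by lra.
rewrite -(ger0_norm cge0) -sqrtr_sqr -sqrtrM ?sqr_ge0 //.
rewrite ler_sqrt; last by rewrite !mulr_ge0 ?sqr_ge0 // sumr_ge0 // => g _; rewrite sqr_ge0.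
rewrite mulrCA ler_wpM2l // mulr_sumr; apply: ler_sum => g _.
rewrite -exprMn !expr2.
by apply: ler_pM; [exact: dB0|exact: dB0|exact: le2|exact: le2].
Qed.
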